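(* If $P\in\mathfrak p_{\mathbb C}$ preserves some supersymmetry, i.e. there exists $0\ne\xi\in\mathbb C^{16}$ with $\sum_{I,A}\Gamma^I_{\dot AA}P^A\xi^I=0$ for all $\dot A=1,\dots,128$, then $P$ is a nilpotent element of $(\mathfrak e_8)_{\mathbb C}$. In particular, for every supersymmetric solution of the timelike class, $P_z$ is nilpotent at every point of spacetime.
   Context: $(\mathfrak e_8)_{\mathbb C}=\mathfrak{so}(16)_{\mathbb C}\oplus\mathfrak p_{\mathbb C}$ with $\mathfrak{so}(16)$ generators $X^{IJ}$ and $\mathfrak p_{\mathbb C}$ spanned by $Y^A$, $A=1,\dots,128$, with $[X^{IJ},Y^A]=-\tfrac12\Gamma^{IJ}_{AB}Y^B$, $[Y^A,Y^B]=\tfrac12\Gamma^{IJ}_{AB}X^{IJ}$; $\Gamma^I_{A\dot A}$ are real chiral blocks of $SO(16)$ gamma matrices, $\Gamma^{IJ}_{AB}=\tfrac12(\Gamma^I_{A\dot A}\Gamma^J_{\dot AB}-\Gamma^J_{A\dot A}\Gamma^I_{\dot AB})$, and $P=P^AY^A$. An element is nilpotent if its adjoint action is nilpotent. In the timelike class, $P_z$ is the $z$-component of $P=\tfrac{1-\theta}{2}V^{-1}dV$ and supersymmetry requires $\bar\zeta^I\Gamma^I_{\dot AA}P^A_z=0$ with $\zeta^I=\epsilon^I_1+i\epsilon^I_2$ not identically zero. *)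

(* Defs.v *)
From HB Require Import structures.
From mathcomp Require Import all_boot all_order all_algebra.
Set Implicit Arguments. Unset Strict Implicit. Unset Printing Implicit Defensive.
Import Order.TTheory GRing.Theory Num.Theory.
Local Open Scope ring_scope.

Section E8.
Variable C : numClosedFieldType.

(* Real chiral blocks of SO(16) gamma matrices: g I is the 128x128 matrix
   with (g I) A Adot = Gamma^I_{A Adot}; the other block is its transpose,
   Gamma^I_{Adot A} = Gamma^I_{A Adot}. *)
Definition gamma_blocks (g : 'I_16 -> 'M[C]_128) : Prop :=
  (forall I A Ad, g I A Ad \is Num.real) /\
  (forall I J : 'I_16,
      g I *m (g J)^T + g J *m (g I)^T = ((I == J)%:R *+ 2)%:M) /\
  (forall I J : 'I_16,
      (g I)^T *m g J + (g J)^T *m g I = ((I == J)%:R *+ 2)%:M).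

Definition GammaIJ (g : 'I_16 -> 'M[C]_128) (I J : 'I_16) : 'M[C]_128 :=
  2^-1 *: (g I *m (g J)^T - g J *m (g I)^T).

(* An element of (e8)_C = so(16)_C (+) p_C is encoded as a pair (a, y) with
   a an antisymmetric 16x16 matrix and y a row vector in C^128, standing for
   sum_{I,J} a_{IJ} X^{IJ} + sum_A y_A Y^A. *)
Definition e8_elt (x : 'M[C]_16 * 'rV[C]_128) : Prop := x.1^T = - x.1.

(* ad_P for P = sum_A P_A Y^A, computed from the brackets
   [Y^A, Y^B] = 1/2 Gamma^{IJ}_{AB} X^{IJ},
   [P, X^{IJ}] = - [X^{IJ}, P] = 1/2 Gamma^{IJ}_{AB} P^A Y^B. *)
Definition adP (g : 'I_16 -> 'M[C]_128) (P : 'rV[C]_128)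
    (x : 'M[C]_16 * 'rV[C]_128) : 'M[C]_16 * 'rV[C]_128 :=
  (\matrix_(I, J) (2^-1 * (P *m GammaIJ g I J *m x.2^T) 0 0),
   2^-1 *: \sum_(I < 16) \sum_(J < 16) x.1 I J *: (P *m GammaIJ g I J)).

Definition nilpotent_in_e8 (g : 'I_16 -> 'M[C]_128) (P : 'rV[C]_128) : Prop :=
  exists n : nat, forall x, e8_elt x -> iter n (adP g P) x = (0, 0).

Definition preserves_susy (g : 'I_16 -> 'M[C]_128) (P : 'rV[C]_128) : Prop :=
  exists xi : 'rV[C]_16, xi != 0 /\
    forall Ad : 'I_128,
      \sum_(I < 16) \sum_(A < 128) g I A Ad * P 0 A * xi 0 I = 0.

End E8.

(* Main.v *)
Require Import Defs.
From HB Require Import structures.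
From mathcomp Require Import all_boot all_order all_algebra ring.
Import Order.TTheory GRing.Theory Num.Theory.
Local Open Scope ring_scope.

Set Implicit Arguments. Unset Strict Implicit.
Section Cl.
Variable C : numClosedFieldType.

Definition dot (u v : 'I_16 -> C) := \sum_I u I * v I.
Definition lc (v : 'I_16 -> C) (h : 'I_16 -> 'M[C]_128) := \sum_I v I *: h I.

Lemma sum_delta (v : 'I_16 -> C) I : \sum_J v J * (I == J)%:R = v I.
Proof.
rewrite (bigD1 I) //= eqxx mulr1 big1 ?addr0 // => J /negbTE.
by rewrite eq_sym => ->; rewrite mulr0.
Qed.

Lemma clv (h k : 'I_16 -> 'M[C]_128)
  (hc : forall I J, h I *m k J + h J *m k I = ((I == J)%:R *+ 2)%:M) I v :
  h I *m lc v k + lc v h *m k I = (v I *+ 2)%:M.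
Proof.
rewrite /lc mulmx_sumr mulmx_suml -big_split /=.
rewrite (eq_bigr (fun J => (v J * (I == J)%:R *+ 2)%:M)); last first.
  by move=> J _; rewrite -scalemxAr -scalemxAl -scalerDr hc scale_scalar_mx mulrnAr.
by rewrite -raddf_sum /= sumrMnl sum_delta.
Qed.

Lemma clvv (h k : 'I_16 -> 'M[C]_128)
  (hc : forall I J, h I *m k J + h J *m k I = ((I == J)%:R *+ 2)%:M) u v :
  lc u h *m lc v k + lc v h *m lc u k = (dot u v *+ 2)%:M.
Proof.
have e : lc v h *m lc u k = \sum_I u I *: (lc v h *m k I).
  by rewrite /lc mulmx_sumr; apply: eq_bigr => I _; rewrite scalemxAr.
rewrite e {1}/lc mulmx_suml -big_split /=.
rewrite (eq_bigr (fun I => (u I * v I *+ 2)%:M)); last first.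
  by move=> I _; rewrite -scalemxAl -scalerDr (clv hc) scale_scalar_mx mulrnAr.
by rewrite -raddf_sum /= sumrMnl.
Qed.

Lemma trZ m n (a : C) (M : 'M[C]_(m,n)) : (a *: M)^T = a *: M^T.
Proof. by apply/matrixP => i j; rewrite !mxE. Qed.

Lemma lc_tr v (h : 'I_16 -> 'M[C]_128) : (lc v h)^T = lc v (fun I => (h I)^T).
Proof. rewrite /lc raddf_sum; by apply: eq_bigr => I _; exact: trZ. Qed.

End Cl.

Unset Implicit Arguments.

Section Main.
Variable C : numClosedFieldType.
Variable g : 'I_16 -> 'M[C]_128.
Hypothesis cl1 : forall I J : 'I_16,
      g I *m (g J)^T + g J *m (g I)^T = ((I == J)%:R *+ 2)%:M.
Hypothesis cl2 : forall I J : 'I_16,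
      (g I)^T *m g J + (g J)^T *m g I = ((I == J)%:R *+ 2)%:M.
Variable P : 'rV[C]_128.
Variable x : 'I_16 -> C.
Hypothesis hPG : P *m lc x g = 0.

Let G := lc x g.

Lemma GT : G^T = lc x (fun I => (g I)^T).
Proof. exact: lc_tr. Qed.

Lemma F1 I : g I *m G^T + G *m (g I)^T = (x I *+ 2)%:M.
Proof. by rewrite GT; apply: (clv (h:=g) (k:=fun I => (g I)^T)). Qed.

Lemma F2 I : (g I)^T *m G + G^T *m g I = (x I *+ 2)%:M.
Proof. by rewrite GT; apply: (clv (h:=fun I => (g I)^T) (k:=g)). Qed.

Lemma two_neq0 : (2 : C) != 0.
Proof. by rewrite pnatr_eq0. Qed.

Lemma half2 (z : C) : 2^-1 * (z *+ 2) = z.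
Proof. by rewrite -[z *+ 2]mulr_natr mulrC -mulrA mulfV ?mulr1 // two_neq0. Qed.

Lemma yg (y : 'rV[C]_128) : y *m G = 0 ->
  forall I, y *m g I *m G^T = (x I *+ 2) *: y.
Proof.
move=> hy I; have := congr1 (mulmx y) (F1 I).
by rewrite mulmxDr !mulmxA hy mul0mx addr0 mul_mx_scalar.
Qed.

Lemma GammaS I : \sum_J x J *: GammaIJ g I J = 2^-1 *: (g I *m G^T - G *m (g I)^T).
Proof.
rewrite GT /lc mulmx_sumr mulmx_suml -sumrB scaler_sumr.
apply: eq_bigr => J _; rewrite /GammaIJ scalerA mulrC -scalerA.
by rewrite -scalemxAr -scalemxAl -scalerBr.
Qed.

Lemma PGammaS I : P *m (\sum_J x J *: GammaIJ g I J) = x I *: P.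
Proof.
rewrite GammaS -scalemxAr mulmxBr !mulmxA yg // hPG mul0mx subr0.
by rewrite scalerA half2.
Qed.

Definition bm (y : 'rV[C]_128) : 'M[C]_16 :=
  \matrix_(I, J) (2^-1 * (P *m GammaIJ g I J *m y^T) 0 0).
Definition cm (a : 'M[C]_16) : 'rV[C]_128 :=
  2^-1 *: \sum_(I < 16) \sum_(J < 16) a I J *: (P *m GammaIJ g I J).

Lemma adPE z : adP g P z = (bm z.2, cm z.1).
Proof. by []. Qed.

Definition Q0 (a : 'M[C]_16) := exists l, forall I, \sum_J a I J * x J = l * x I.

Lemma L0 y : Q0 (bm y).
Proof.
exists (2^-1 * (P *m y^T) 0 0) => I.
have E : (P *m (\sum_J x J *: GammaIJ g I J) *m y^T) 0 0
   = \sum_J x J * (P *m GammaIJ g I J *m y^T) 0 0.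
  rewrite mulmx_sumr mulmx_suml summxE; apply: eq_bigr => J _.
  by rewrite -scalemxAr -scalemxAl mxE.
rewrite PGammaS -scalemxAl mxE in E.
have -> : \sum_J bm y I J * x J = 2^-1 * \sum_J x J * (P *m GammaIJ g I J *m y^T) 0 0.
  rewrite mulr_sumr; apply: eq_bigr => J _; rewrite mxE; ring.
by rewrite -E; ring.
Qed.

Lemma mxNE m n (A : 'M[C]_(m,n)) i j : (- A) i j = - A i j.
Proof. by rewrite mxE. Qed.

Lemma bmE y I J : bm y I J = 2^-1 * (P *m GammaIJ g I J *m y^T) 0 0.
Proof. by rewrite [LHS]mxE. Qed.

Lemma GammaN I J : GammaIJ g J I = - GammaIJ g I J.
Proof. by rewrite /GammaIJ -scalerN opprB. Qed.

Lemma bm_anti y : (bm y)^T = - bm y.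
Proof.
apply/matrixP => I J; rewrite [LHS]mxE [RHS]mxE !bmE GammaN mulmxN mulNmx.
by rewrite mxNE mulrN.
Qed.


Lemma pgg I J : P *m g I *m (g J)^T *m G
   = (x J *+ 2) *: (P *m g I) - (x I *+ 2) *: (P *m g J).
Proof.
have e : (g J)^T *m G = (x J *+ 2)%:M - G^T *m g J by rewrite -(F2 J) addrK.
by rewrite -(mulmxA (P *m g I)) e mulmxBr mul_mx_scalar !mulmxA yg // -scalemxAl.
Qed.

Lemma PGG I J : P *m GammaIJ g I J *m G
   = (x J *+ 2) *: (P *m g I) - (x I *+ 2) *: (P *m g J).
Proof.
rewrite /GammaIJ -scalemxAr -scalemxAl mulmxBr mulmxBl !mulmxA !pgg.
by rewrite opprB -mulr2n -scaler_nat scalerA mulVf ?scale1r // two_neq0.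
Qed.

Lemma PG_sum : \sum_I x I *: (P *m g I) = 0.
Proof.
rewrite -[RHS]hPG /lc mulmx_sumr; apply: eq_bigr => I _; by rewrite scalemxAr.
Qed.

Lemma sumPG (f : 'I_16 -> C) c : (forall I, f I = c * x I) ->
  \sum_I f I *: (P *m g I) = 0.
Proof.
move=> hf; rewrite (eq_bigr (fun I => c *: (x I *: (P *m g I)))); last first.
  by move=> I _; rewrite hf scalerA.
by rewrite -scaler_sumr PG_sum scaler0.
Qed.

Lemma L1 a : a^T = -a -> Q0 a -> cm a *m G = 0.
Proof.
move=> ha [l hl]; rewrite /cm -scalemxAl mulmx_suml.
rewrite (eq_bigr (fun I => \sum_J (a I J * (x J *+ 2)) *: (P *m g I)
   - \sum_J (a I J * (x I *+ 2)) *: (P *m g J))); last first.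
  move=> I _; rewrite mulmx_suml -sumrB; apply: eq_bigr => J _.
  by rewrite -scalemxAl PGG scalerBr !scalerA.
rewrite sumrB [X in _ - X]exchange_big /=.
have e1 : \sum_I \sum_J (a I J * (x J *+ 2)) *: (P *m g I) = 0.
  rewrite (eq_bigr (fun I => (\sum_J a I J * (x J *+ 2)) *: (P *m g I))); last first.
    by move=> I _; rewrite scaler_suml.
  apply: (sumPG _ (l *+ 2)) => I.
  rewrite (eq_bigr (fun J => (a I J * x J) *+ 2)); last by move=> J _; rewrite mulrnAr.
  by rewrite sumrMnl hl mulrnAl.
have e2 : \sum_J \sum_I (a I J * (x I *+ 2)) *: (P *m g J) = 0.
  rewrite (eq_bigr (fun J => (\sum_I a I J * (x I *+ 2)) *: (P *m g J))); last first.
    by move=> J _; rewrite scaler_suml.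
  apply: (sumPG _ (- (l *+ 2))) => J.
  rewrite (eq_bigr (fun I => - ((a J I * x I) *+ 2))); last first.
    move=> I _; have := congr1 (fun M : 'M[C]_16 => M J I) ha; rewrite !mxE => ->.
    by rewrite mulrnAr mulNr mulNrn.
  by rewrite sumrN sumrMnl hl mulNr mulrnAl.
by rewrite e1 e2 subr0 scaler0.
Qed.


Lemma mxZE m n (a : C) (A : 'M[C]_(m,n)) i j : (a *: A) i j = a * A i j.
Proof. by rewrite mxE. Qed.
Lemma mxBE m n (A B : 'M[C]_(m,n)) i j : (A - B) i j = A i j - B i j.
Proof. by rewrite mxE mxNE. Qed.

Lemma dbl0 m n (M : 'M[C]_(m,n)) : M + M = 0 -> M = 0.
Proof.
move=> h; apply/eqP; have : 2 *: M == 0 by rewrite scaler_nat mulr2n h.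
by rewrite scaler_eq0 (negbTE two_neq0).
Qed.

Hypothesis hxx : dot x x = 0.
Variable K : 'I_16.
Hypothesis hK : x K != 0.

Lemma GGt : G *m G^T = 0.
Proof.
apply: dbl0; rewrite GT.
by rewrite (clvv (h:=g) (k:=fun I => (g I)^T)) ?hxx ?mul0rn ?raddf0.
Qed.

Lemma GtG : G^T *m G = 0.
Proof.
apply: dbl0; rewrite GT.
by rewrite (clvv (h:=fun I => (g I)^T) (k:=g)) ?hxx ?mul0rn ?raddf0.
Qed.

Lemma xK2 : x K *+ 2 != 0.
Proof. by rewrite -[x K *+ 2]mulr_natr mulf_neq0 // two_neq0. Qed.

Let c := (x K *+ 2)^-1.

Lemma yK (y : 'rV[C]_128) : y *m G = 0 -> y = c *: (y *m g K *m G^T).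
Proof. by move=> hy; rewrite yg // scalerA mulVf ?scale1r // xK2. Qed.

Lemma core I J : G^T *m g I *m (g J)^T *m G
  = (x I *+ 2) *: ((g J)^T *m G) - (x J *+ 2) *: ((g I)^T *m G).
Proof.
have e1 : G^T *m g I = (x I *+ 2)%:M - (g I)^T *m G.
  by rewrite -(F2 I) [_ + G^T *m _]addrC addrK.
have e2 : G *m (g J)^T = (x J *+ 2)%:M - g J *m G^T.
  by rewrite -(F1 J) [_ + G *m _]addrC addrK.
have h2 : (g I)^T *m G *m (g J)^T *m G = (x J *+ 2) *: ((g I)^T *m G).
  rewrite -(mulmxA _ G) e2 mulmxBr mul_mx_scalar mulmxBl -scalemxAl.
  by rewrite -!mulmxA GtG !mulmx0 subr0.
by rewrite e1 !mulmxBl mul_scalar_mx -!scalemxAl h2.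
Qed.


Definition Q1 (a : 'M[C]_16) :=
  exists q, dot q x = 0 /\ forall I J, a I J = x I * q J - x J * q I.

Lemma trmxZ m n (a : C) (A : 'M[C]_(m,n)) : (a *: A)^T = a *: A^T.
Proof. by apply/matrixP => i j; rewrite !mxE. Qed.

Lemma L2 y : y *m G = 0 -> Q1 (bm y).
Proof.
move=> hy.
have sP := yK _ hPG.
have sy : y^T = c *: (G *m (g K)^T *m y^T).
  by rewrite {1}(yK _ hy) trmxZ !trmx_mul trmxK mulmxA.
pose s J := (P *m g K *m (g J)^T *m G *m (g K)^T *m y^T) 0 0.
have NE : forall I J, (P *m g I *m (g J)^T *m y^T) 0 0
    = c ^+ 2 * ((x I *+ 2) * s J - (x J *+ 2) * s I).
  move=> I J.
  have -> : P *m g I *m (g J)^T *m y^T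
     = c ^+ 2 *: (P *m g K *m (G^T *m g I *m (g J)^T *m G) *m (g K)^T *m y^T).
    rewrite [in LHS]sP [in LHS]sy -!scalemxAl -scalemxAr scalerA expr2.
    by rewrite !mulmxA.
  rewrite core mulmxBr !mulmxBl -!scalemxAr -!scalemxAl mxZE mxBE !mxZE.
  by rewrite /s !mulmxA.
exists (fun J => c ^+ 2 * s J); split.
  have E : (P *m g K *m (\sum_J x J *: (g J)^T) *m G *m (g K)^T *m y^T) 0 0
      = \sum_J x J * s J.
    rewrite (mulmx_sumr (P *m g K)) !mulmx_suml summxE; apply: eq_bigr => J _.
    by rewrite -scalemxAr -!scalemxAl mxZE.
  rewrite -[\sum_J x J *: (g J)^T]/(lc x (fun J => (g J)^T)) -GT -(mulmxA (P *m g K)) GtG mulmx0 !mul0mx mxE in E.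
  rewrite /dot (eq_bigr (fun J => c ^+ 2 * (x J * s J))); last by move=> J _; ring.
  by rewrite -mulr_sumr -E mulr0.
move=> I J; rewrite bmE /GammaIJ -scalemxAr -scalemxAl mulmxBr mulmxBl !mulmxA.
rewrite mxZE mxBE !NE.
have e : forall (h a b u v w : C), h * 2 = 1 ->
   h * (h * (w * (u *+ 2 * b - v *+ 2 * a) - w * (v *+ 2 * a - u *+ 2 * b)))
   = u * (w * b) - v * (w * a).
  move=> h a b u v w h2.
  transitivity ((h * 2) * (h * 2) * (u * (w * b) - v * (w * a))); first by ring.
  by rewrite h2 !mul1r.
by apply: e; rewrite mulVf // two_neq0.
Qed.


Lemma PQ q : dot x q = 0 -> P *m lc q g *m G^T = 0.
Proof.
move=> hq.
have h := clvv (h:=fun I => (g I)^T) (k:=g) cl2 x q.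
rewrite hq mul0rn raddf0 -GT -lc_tr in h.
have e : G^T *m lc q g = - ((lc q g)^T *m G) by apply/eqP; rewrite -addr_eq0 h.
rewrite [in LHS](yK _ hPG) -!scalemxAl -!mulmxA (mulmxA G^T) e mulNmx -mulmxA GGt mulmx0 oppr0 !mulmx0.
by rewrite scaler0.
Qed.

Lemma dsum u v : \sum_I \sum_J (u I * v J) *: (P *m g I *m (g J)^T)
   = P *m lc u g *m (lc v g)^T.
Proof.
rewrite lc_tr /lc (mulmx_sumr P) mulmx_suml; apply: eq_bigr => I _.
rewrite mulmx_sumr; apply: eq_bigr => J _.
by rewrite -scalemxAr -scalemxAr -scalemxAl scalerA mulrC.
Qed.

Lemma lmod_id (a b h : C) (U V : 'rV[C]_128) :
  (a - b) *: (h *: (U - V)) = h *: ((a *: U - a *: V) - (b *: U - b *: V)).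
Proof. by rewrite scalerA mulrC -scalerA scalerBl !scalerBr. Qed.

Lemma L3 a : Q1 a -> cm a = 0.
Proof.
move=> [q [hq ha]].
have hq' : dot x q = 0 by rewrite -hq /dot; apply: eq_bigr => I _; rewrite mulrC.
pose N I J := P *m g I *m (g J)^T.
rewrite /cm (eq_bigr (fun I => 2^-1 *:
   ((\sum_J (x I * q J) *: N I J - \sum_J (x I * q J) *: N J I)
  - (\sum_J (x J * q I) *: N I J - \sum_J (x J * q I) *: N J I)))); last first.
  move=> I _; rewrite -!sumrB scaler_sumr; apply: eq_bigr => J _.
  by rewrite ha /GammaIJ -scalemxAr mulmxBr !mulmxA lmod_id.
rewrite -scaler_sumr !sumrB.
have D1 : \sum_I \sum_J (x I * q J) *: N I J = 0.
  by rewrite dsum hPG !mul0mx.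
have D2 : \sum_I \sum_J (x J * q I) *: N I J = 0.
  rewrite (eq_bigr (fun I => \sum_J (q I * x J) *: N I J)).
    by rewrite dsum PQ.
  by move=> I _; apply: eq_bigr => J _; rewrite mulrC.
have D3 : \sum_I \sum_J (x I * q J) *: N J I = 0.
  rewrite exchange_big /= (eq_bigr (fun J => \sum_I (q J * x I) *: N J I)).
    by rewrite dsum PQ.
  by move=> J _; apply: eq_bigr => I _; rewrite mulrC.
have D4 : \sum_I \sum_J (x J * q I) *: N J I = 0.
  by rewrite exchange_big /= dsum hPG !mul0mx.
by rewrite D1 D2 D3 D4 !subr0 !scaler0.
Qed.


Lemma nil5 z : z.1^T = - z.1 -> iter 5 (adP g P) z = (0, 0).
Proof.
move=> h0.
pose z1 := adP g P z.
have h1 : z1.1^T = - z1.1 /\ Q0 z1.1 by split; [exact: bm_anti | exact: L0].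
pose z2 := adP g P z1.
have h2 : z2.1^T = - z2.1 /\ Q0 z2.1 /\ z2.2 *m G = 0.
  split; first exact: bm_anti.
  split; first exact: L0.
  by apply: L1; case: h1.
pose z3 := adP g P z2.
have h3 : Q1 z3.1 /\ z3.2 *m G = 0.
  case: h2 => [ha [hb hc]]; split; first exact: L2.
  exact: L1.
pose z4 := adP g P z3.
have h4 : Q1 z4.1 /\ z4.2 = 0.
  case: h3 => [ha hb]; split; first exact: L2.
  exact: L3.
have -> : iter 5 (adP g P) z = adP g P z4 by [].
rewrite adPE; case: h4 => [ha ->]; rewrite L3 //.
congr (_, _); apply/matrixP => I J; rewrite bmE trmx0 mulmx0.
by rewrite [(0 : 'M[C]_(1,1)) 0 0]mxE [RHS]mxE mulr0.
Qed.

End Main.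

Theorem mainTheorem4 (C : numClosedFieldType) (g : 'I_16 -> 'M[C]_128)
    (P : 'rV[C]_128) :
  gamma_blocks g -> preserves_susy g P -> nilpotent_in_e8 g P.
Proof.
move=> [_ [cl1 cl2]] [xi [xi0 hs]].
pose x := fun I => xi 0 I.
have hPG : P *m lc x g = 0.
  apply/rowP => Ad; rewrite [RHS]mxE -(hs Ad) mxE.
  under eq_bigr do rewrite summxE mulr_sumr.
  rewrite exchange_big; apply: eq_bigr => I _; apply: eq_bigr => A _.
  rewrite mxE /x; ring.
have [hxx | hxx] := eqVneq (dot x x) 0.
  have [K hK] : exists K, x K != 0.
    case: (pickP (fun K => x K != 0)) => [K hK | h]; first by exists K.
    case/negP: xi0; apply/eqP/rowP => K; rewrite mxE.
    by move/negbFE/eqP: (h K).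
  by exists 5 => z hz; exact: (nil5 _ _ cl1 cl2 _ _ hPG hxx _ hK _ hz).
have P0 : P = 0.
  have h := clvv (h:=g) (k:=fun I => (g I)^T) cl1 x x.
  have := congr1 (mulmx P) h.
  rewrite mulmxDr !mulmxA -lc_tr hPG !mul0mx addr0 mul_mx_scalar => /esym/eqP.
  rewrite scaler_eq0 -mulr_natr mulf_eq0 (negbTE hxx) /= pnatr_eq0 /=.
  by move/eqP.
exists 1 => z _; rewrite P0 /=.
congr (_, _).
  by apply/matrixP => I J; rewrite !mxE big1 ?mulr0 // => j _; rewrite mul0mx mxE mul0r.
by rewrite big1 ?scaler0 // => I _; rewrite big1 // => J _; rewrite !mul0mx scaler0.
Qed.
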